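(* Let $Y$ be a finite-dimensional real or complex vector space, $\mathfrak g\subset\mathfrak{gl}(Y)$ a Lie subalgebra closed under $(S,T)\mapsto U_TS:=TST$, and $\omega$ a bilinear form on $Y$ with $\omega(Tx,y)+\omega(x,Ty)=0$ for all $T\in\mathfrak g$, $x,y\in Y$. Define $F\colon Y\to\mathfrak g^*$ by $\langle F(y),T\rangle=\tfrac12\omega(Ty,y)$, let $\alpha\colon\mathfrak g^*\to\mathfrak g$ and $f(y)=\alpha(F(y))y$. Let nonzero $b_1,\dots,b_s$ and $h>0$ be given and suppose $y_0,y_1,Y_1,\dots,Y_s\in Y$ satisfy \[ Y_i = y_0 + h\sum_{j=1}^{i-1} b_j f(Y_j) + \frac h2 b_i f(Y_i),\qquad y_1 = y_0 + h\sum_{i=1}^s b_i f(Y_i). \] Then $z_0=F(y_0)$, $Z_i=F(Y_i)$, $z_1=F(y_1)$ satisfy \[ Z_i = z_0 - h\sum_{j=1}^{i-1} b_j\operatorname{ad}^*_{\alpha(Z_j)}Z_j - \frac h2 b_i\operatorname{ad}^*_{\alpha(Z_i)}Z_i + \frac{h^2}{4}b_i^2U^*_{\alpha(Z_i)}Z_i,\qquad z_1 = z_0 - h\sum_{i=1}^s b_i\operatorname{ad}^*_{\alpha(Z_i)}Z_i . \]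
   Context: $\langle\cdot,\cdot\rangle$ is the pairing between $\mathfrak g^*$ and $\mathfrak g$; the bracket is $[S,T]=ST-TS$. $\operatorname{ad}^*_Tz\in\mathfrak g^*$ is defined by $\langle\operatorname{ad}^*_Tz,S\rangle=\langle z,[T,S]\rangle$ and $U^*_Tz$ by $\langle U^*_Tz,S\rangle=\langle z,TST\rangle$ for all $S\in\mathfrak g$. *)

(* Defs.v *)
From HB Require Import structures.
From mathcomp Require Import all_boot all_order all_algebra.
Set Implicit Arguments. Unset Strict Implicit. Unset Printing Implicit Defensive.
Import Order.TTheory GRing.Theory Num.Theory.
Local Open Scope ring_scope.

(* Y = 'cV[K]_n, gl(Y) = 'M[K]_n.  Elements of g^* are represented by
   functions 'M[K]_n -> K; two such represent the same element of g^*
   iff they agree on g.  The pairing <z,S> is z S. *)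

Definition momap (K : numFieldType) (n : nat)
  (omega : 'cV[K]_n -> 'cV[K]_n -> K) (y : 'cV[K]_n) : 'M[K]_n -> K :=
  fun T => 2^-1 * omega (T *m y) y.

Definition ad_star (K : numFieldType) (n : nat) (T : 'M[K]_n)
  (z : 'M[K]_n -> K) : 'M[K]_n -> K :=
  fun S => z (T *m S - S *m T).

Definition U_star (K : numFieldType) (n : nat) (T : 'M[K]_n)
  (z : 'M[K]_n -> K) : 'M[K]_n -> K :=
  fun S => z (T *m S *m T).

Definition vfield (K : numFieldType) (n : nat)
  (omega : 'cV[K]_n -> 'cV[K]_n -> K) (alpha : ('M[K]_n -> K) -> 'M[K]_n)
  (y : 'cV[K]_n) : 'cV[K]_n :=
  alpha (momap omega y) *m y.

(* Main.v *)
Require Import Defs.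
From HB Require Import structures.
From mathcomp Require Import all_boot all_order all_algebra.
From mathcomp Require Import ring.
Import Order.TTheory GRing.Theory Num.Theory.
Local Open Scope ring_scope.


Lemma key_lemma (K : numFieldType) (n : nat) (g : {vspace 'M[K]_n})
  (omega : 'cV[K]_n -> 'cV[K]_n -> K) :
  (forall (a : K) x x' y, omega (a *: x + x') y = a * omega x y + omega x' y) ->
  (forall (a : K) x y y', omega x (a *: y + y') = a * omega x y + omega x y') ->
  (forall T x y, T \in g -> omega (T *m x) y + omega x (T *m y) = 0) ->
  forall (A S : 'M[K]_n) (Y : 'cV[K]_n) (c : K), A \in g -> S \in g ->
  momap omega (Y + c *: (A *m Y)) S =
    momap omega Y S - c * ad_star A (momap omega Y) S
    - c ^+ 2 * U_star A (momap omega Y) S.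
Proof.
move=> Hl Hr Hinv A S Y c HA HS.
have Dl (x x' y : 'cV[K]_n) : omega (x + x') y = omega x y + omega x' y.
  by have := Hl 1 x x' y; rewrite scale1r mul1r.
have Zl (a : K) (x y : 'cV[K]_n) : omega (a *: x) y = a * omega x y.
  have h0 : omega 0 y = 0.
    have := Dl 0 0 y; rewrite addr0 => /(congr1 (fun t => t - omega 0 y)).
    by rewrite subrr addrK => <-.
  by rewrite -[a *: x]addr0 Hl h0 addr0.
have Dr (x y y' : 'cV[K]_n) : omega x (y + y') = omega x y + omega x y'.
  by have := Hr 1 x y y'; rewrite scale1r mul1r.
have Zr (a : K) (x y : 'cV[K]_n) : omega x (a *: y) = a * omega x y.
  have h0 : omega x 0 = 0.
    have := Dr x 0 0; rewrite addr0 => /(congr1 (fun t => t - omega x 0)).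
    by rewrite subrr addrK => <-.
  by rewrite -[a *: y]addr0 Hr h0 addr0.
have Bl (x x' y : 'cV[K]_n) : omega (x - x') y = omega x y - omega x' y.
  by rewrite Dl (_ : - x' = (-1) *: x') ?Zl ?mulN1r // scaleN1r.
have I1 (x y : 'cV[K]_n) : omega x (A *m y) = - omega (A *m x) y.
  by apply/eqP; rewrite -addr_eq0 addrC Hinv.
rewrite /momap /ad_star /U_star.
rewrite mulmxDr -scalemxAr !Dl !Dr !Zl !Zr !I1 !mulmxBl Bl !mulmxA.
ring.
Qed.

Lemma sum_ltS {V : zmodType} {s : nat} (F : 'I_s -> V) (i : 'I_s) :
  \sum_(j < s | (j < i.+1)%N) F j = \sum_(j < s | (j < i)%N) F j + F i.
Proof.
rewrite (bigD1 i) /= ?ltnSn // addrC; congr (_ + _).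
apply: eq_bigl => j; rewrite ltnS leq_eqVlt -val_eqE /=.
by case: (ltngtP j i).
Qed.

Theorem corollary3p9 (K : numFieldType) (n s : nat)
  (g : {vspace 'M[K]_n})
  (omega : 'cV[K]_n -> 'cV[K]_n -> K)
  (alpha : ('M[K]_n -> K) -> 'M[K]_n)
  (b : 'I_s -> K) (h : K)
  (y0 y1 : 'cV[K]_n) (Yv : 'I_s -> 'cV[K]_n) :
  (* g is a Lie subalgebra of gl(Y) *)
  (forall S T, S \in g -> T \in g -> S *m T - T *m S \in g) ->
  (* g is closed under (S,T) |-> T S T *)
  (forall S T, S \in g -> T \in g -> T *m S *m T \in g) ->
  (* omega is bilinear *)
  (forall (a : K) x x' y, omega (a *: x + x') y = a * omega x y + omega x' y) ->
  (forall (a : K) x y y', omega x (a *: y + y') = a * omega x y + omega x y') ->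
  (* g-invariance of omega *)
  (forall T x y, T \in g -> omega (T *m x) y + omega x (T *m y) = 0) ->
  (* alpha : g^* -> g *)
  (forall z, alpha z \in g) ->
  (forall z w, (forall S, S \in g -> z S = w S) -> alpha z = alpha w) ->
  (forall i, b i != 0) ->
  0 < h ->
  (forall i : 'I_s, Yv i = y0 + h *: (\sum_(j < s | (j < i)%N) b j *: vfield omega alpha (Yv j))
                          + (h / 2 * b i) *: vfield omega alpha (Yv i)) ->
  y1 = y0 + h *: (\sum_(i < s) b i *: vfield omega alpha (Yv i)) ->
  (forall i : 'I_s, forall S, S \in g ->
     momap omega (Yv i) S =
       momap omega y0 S
       - h * (\sum_(j < s | (j < i)%N)
                b j * ad_star (alpha (momap omega (Yv j))) (momap omega (Yv j)) S)
       - h / 2 * b i * ad_star (alpha (momap omega (Yv i))) (momap omega (Yv i)) S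
       + h ^+ 2 / 4 * b i ^+ 2 * U_star (alpha (momap omega (Yv i))) (momap omega (Yv i)) S)
  /\
  (forall S, S \in g ->
     momap omega y1 S =
       momap omega y0 S
       - h * (\sum_(i < s)
                b i * ad_star (alpha (momap omega (Yv i))) (momap omega (Yv i)) S)).
Proof.
Proof.
move=> _ _ Hl Hr Hinv Halpha _ _ _ HY Hy1.
set f := fun j => vfield omega alpha (Yv j).
set A := fun j => alpha (momap omega (Yv j)).
have fE j : f j = A j *m Yv j by [].
set W := fun k : nat => y0 + h *: \sum_(j < s | (j < k)%N) b j *: f j.
have Wi (i : 'I_s) : W i = Yv i + (- (h / 2 * b i)) *: (A i *m Yv i).
  by rewrite -fE {1}(HY i) scaleNr addrK.
have WS (i : 'I_s) : W i.+1 = Yv i + (h / 2 * b i) *: (A i *m Yv i).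
  rewrite /W sum_ltS scalerDr addrA -/(W i) Wi -fE -addrA; congr (_ + _).
  rewrite scalerA -scalerDl; congr (_ *: _).
  have h2 : (2 : K) != 0 by rewrite pnatr_eq0.
  by field.
have KL := @key_lemma K n g omega Hl Hr Hinv.
have Wtel : forall k, (k <= s)%N -> forall S, S \in g ->
   momap omega (W k) S = momap omega y0 S - h * (\sum_(j < s | (j < k)%N)
                b j * ad_star (A j) (momap omega (Yv j)) S).
  elim=> [|k IH] Hk S HS.
    by rewrite /W big_pred0 ?big_pred0 // ?scaler0 ?mulr0 ?addr0 ?subr0.
  have Hk' : (k < s)%N by [].
  have := sum_ltS (fun j => b j * ad_star (A j) (momap omega (Yv j)) S) (Ordinal Hk').
  move=> /= ->.
  have := WS (Ordinal Hk') => /= ->.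
  rewrite KL ?Halpha //.
  have := IH (ltnW Hk') S HS.
  have := Wi (Ordinal Hk') => /= ->.
  rewrite KL ?Halpha // => E.
  have h2 : (2 : K) != 0 by rewrite pnatr_eq0.
  apply/eqP; rewrite -subr_eq0; apply/eqP.
  set u := momap omega (Yv (Ordinal Hk')) S in E *.
  set ad := ad_star _ _ S in E *.
  set U := U_star _ _ S in E *.
  set sm := \sum_(j < s | (j < k)%N) _ in E *.
  have -> : u = momap omega y0 S - h * sm + ((- (h / 2 * b (Ordinal Hk'))) * ad
           + (- (h / 2 * b (Ordinal Hk'))) ^+ 2 * U).
    by rewrite -E; ring.
  by field.
split.
  move=> i S HS.
  have := Wtel i (ltnW (ltn_ord i)) S HS.
  rewrite Wi KL ?Halpha // => E.
  have h2 : (2 : K) != 0 by rewrite pnatr_eq0.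
  have h4 : (4 : K) != 0 by rewrite pnatr_eq0.
  apply/eqP; rewrite -subr_eq0; apply/eqP.
  set u := momap omega (Yv i) S in E *.
  set ad := ad_star _ _ S in E *.
  set U := U_star _ _ S in E *.
  set sm := \sum_(j < s | (j < i)%N) _ in E *.
  have -> : u = momap omega y0 S - h * sm + ((- (h / 2 * b i)) * ad
           + (- (h / 2 * b i)) ^+ 2 * U).
    by rewrite -E; ring.
  by field.
move=> S HS.
have E := Wtel s (leqnn s) S HS.
have -> : y1 = W s.
  by rewrite Hy1 /W; congr (_ + _ *: _); apply: eq_bigl => j; rewrite ltn_ord.
rewrite E; congr (_ - _ * _); apply: eq_bigl => j; by rewrite ltn_ord.
Qed.
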